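(* Suppose the loss $f\colon\Theta\to\mathbb{R}$ is convex. Then for the core Two-Tailed Averaging algorithm run on any sequence of iterates $(\theta_t)$, the sequence $(F_N)$ of losses of the short averages at switch points is monotonically non-increasing: $F_{N+1}\le F_N$ for every $N\in\mathbb{N}$ for which the $(N+1)$-th switch point exists.
   Context: Let $\Theta=\mathbb{R}^d$, let $(\theta_t)_{t\in\mathbb{N}_0}$ be a sequence in $\Theta$, let $f\colon\Theta\to\mathbb{R}$ be a loss function, and let $E\in\mathbb{N}$ be the evaluation period. For integers $t\ge \Delta\ge 1$ write $\mathrm{avg}(t,\Delta)=\frac{1}{\Delta}\sum_{i=t+1-\Delta}^{t}\theta_i$. Core Two-Tailed Averaging: it maintains integers $S,L$ and vectors $\theta^S,\theta^L$, initially $S=L=0$, $\theta^S=\theta^L=0$. For $t=1,2,\dots$: first $\theta_t$ is added to both averages, i.e. $\theta^S\leftarrow\theta^S+(\theta_t-\theta^S)/(S+1)$, $S\leftarrow S+1$, and $\theta^L\leftarrow\theta^L+(\theta_t-\theta^L)/(L+1)$, $L\leftarrow L+1$ (so $\theta^S=\mathrm{avg}(t,S)$, $\theta^L=\mathrm{avg}(t,L)$). Then, if $E$ divides $t$: if $f(\theta^S)\le f(\theta^L)$, a switch is performed: $L\leftarrow S$, $\theta^L\leftarrow\theta^S$, $S\leftarrow 0$. $S'(t),\theta^{S'}(t)$ denote the values of $S,\theta^S$ in the $t$-th pass after $\theta_t$ has been added but before the possible switch. A time step $n$ is a switch point if a switch is performed at $t=n$. For $N\in\mathbb{N}$: $Q_N$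 is the $N$-th switch point (in increasing order), $F_N=f(\theta^{S'}(Q_N))$, and $S_N=S'(Q_N)$. *)

(* Defs.v *)
(* R : realType, Theta = 'rV[R]_d. *)
From mathcomp Require Import all_boot all_order all_algebra.
From mathcomp Require Import all_classical all_reals all_analysis.
Set Implicit Arguments. Unset Strict Implicit. Unset Printing Implicit Defensive.
Import Order.TTheory GRing.Theory Num.Theory.
Local Open Scope ring_scope.

Section TTA.
Variables (R : realType) (d : nat).
Local Notation V := 'rV[R]_d.

Record tta_state := TTAState { stS : nat; stL : nat; thS : V; thL : V }.

Definition tta_init : tta_state := TTAState 0 0 0 0.

Definition tta_add (s : tta_state) (x : V) : tta_state :=
  TTAState (stS s).+1 (stL s).+1
    (thS s + ((stS s).+1%:R)^-1 *: (x - thS s))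
    (thL s + ((stL s).+1%:R)^-1 *: (x - thL s)).

Definition tta_switch (s : tta_state) : tta_state :=
  TTAState 0 (stS s) (thS s) (thS s).

Definition tta_switchb (f : V -> R) (E t : nat) (s' : tta_state) : bool :=
  (E %| t)%N && (f (thS s') <= f (thL s')).

Definition tta_step (f : V -> R) (E t : nat) (s : tta_state) (x : V) :=
  let s' := tta_add s x in if tta_switchb f E t s' then tta_switch s' else s'.

Fixpoint tta_state_at (f : V -> R) (E : nat) (theta : nat -> V) (t : nat)
  : tta_state :=
  match t with
  | 0 => tta_init
  | t'.+1 => tta_step f E t'.+1 (tta_state_at f E theta t') (theta t'.+1)
  end.

(* Values in the t-th pass after theta_t is added but before the possible
   switch (meaningful for t >= 1): S'(t), theta^{S'}(t), ... *)
Definition tta_pre (f : V -> R) (E : nat) (theta : nat -> V) (t : nat) :=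
  tta_add (tta_state_at f E theta t.-1) (theta t).

Definition is_switch_point (f : V -> R) (E : nat) (theta : nat -> V) (n : nat)
  : bool := (0 < n)%N && tta_switchb f E n (tta_pre f E theta n).

Definition is_Nth_switch_point (f : V -> R) (E : nat) (theta : nat -> V)
  (N n : nat) : Prop :=
  is_switch_point f E theta n /\
  (\sum_(1 <= i < n.+1) is_switch_point f E theta i)%N = N.

Definition F_at (f : V -> R) (E : nat) (theta : nat -> V) (n : nat) : R :=
  f (thS (tta_pre f E theta n)).

End TTA.

(* Main.v *)
Require Import Defs.
From mathcomp Require Import all_boot all_order all_algebra.
From mathcomp Require Import all_classical all_reals all_analysis.
From mathcomp Require Import ring lra zify.
Import Order.TTheory GRing.Theory Num.Theory.
Local Open Scope classical_set_scope.
Local Open Scope ring_scope.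

Lemma cvx_use (R : realType) (d : nat) (f : 'rV[R]_d -> R) (a : R) x y :
  convex_function [set: 'rV[R]_d] f -> 0 <= a -> a <= 1 ->
  f (a *: x + (1 - a) *: y) <= a * f x + (1 - a) * f y.
Proof.
move=> hf a0 a1.
by have := hf (Itv01 a0 a1) x y (in_setT _) (in_setT _).
Qed.

Section Aux.
Variables (R : realType) (d : nat).

Definition inv_at (S0 : nat) (th0 : 'rV[R]_d)
  (k : nat) (s : tta_state R d) : Prop :=
  stS s = k /\ stL s = (S0 + k)%N /\
  (S0 + k)%:R *: thL s = S0%:R *: th0 + k%:R *: thS s.

Lemma inv_add S0 th0 k s x :
  inv_at S0 th0 k s -> inv_at S0 th0 k.+1 (tta_add s x).
Proof.
case=> hS [hL hE]; rewrite /inv_at /tta_add /= hS hL addnS; split=> //; split=> //.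
have nz : forall m : nat, m.+1%:R != 0 :> R by move=> m; rewrite pnatr_eq0.
rewrite !scalerDr !scalerA !mulfV // !scale1r.
rewrite -(@natr1 R (S0 + k)%N) -(@natr1 R k) !scalerDl !scale1r hE.

set a := thS s; set b := thL s.
by rewrite -[LHS]addrA [b + _]addrC subrK -[_ + a + _]addrA [a + _]addrC subrK addrA.
Qed.


Variables (f : 'rV[R]_d -> R) (E : nat) (theta : nat -> 'rV[R]_d).

Local Notation st := (tta_state_at f E theta).
Local Notation sp := (is_switch_point f E theta).
Local Notation pre := (tta_pre f E theta).
Definition cnt n := (\sum_(1 <= i < n.+1) sp i)%N.

Lemma st_succ t : st t.+1 =
  if sp t.+1 then tta_switch (pre t.+1) else pre t.+1.
Proof. by []. Qed.

Lemma cnt_succ n : cnt n.+1 = (cnt n + sp n.+1)%N.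
Proof. by rewrite /cnt big_nat_recr. Qed.

Lemma cnt_mono m k : (cnt m <= cnt (m + k))%N.
Proof.
elim: k => [|k IH]; first by rewrite addn0.
by rewrite addnS cnt_succ (leq_trans IH) ?leq_addr.
Qed.

Lemma cnt_lt m n : (m < n)%N -> (cnt m + sp n <= cnt n)%N.
Proof.
move=> mn; have [n' En] : exists n', n = n'.+1 by exists n.-1; rewrite prednK // (leq_ltn_trans _ mn).
rewrite En; rewrite En in mn.
rewrite cnt_succ leq_add2r.
have -> : n' = (m + (n' - m))%N by rewrite subnKC // -ltnS.
exact: cnt_mono.
Qed.


Lemma inv_run QN QN1 : sp QN -> (forall i, (QN < i < QN1)%N -> ~~ sp i) ->
  forall k, (QN + k < QN1)%N ->
  inv_at (stS (pre QN)) (thS (pre QN)) k (st (QN + k)).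
Proof.
case: QN => [//|Q'] spQ nosp; elim=> [|k IH] hk.
  rewrite addn0 st_succ spQ /inv_at /tta_switch /=.
  by rewrite addn0 scale0r addr0.
rewrite addnS st_succ (negbTE (nosp _ _)); last first.
  by rewrite ltnS leq_addr -addnS hk.
apply: inv_add; apply: IH; apply: leq_trans hk; by rewrite addnS.
Qed.

Lemma final (S0 k : nat) th0 x y : convex_function [set: 'rV[R]_d] f ->
  (0 < S0)%N -> (S0 + k.+1)%:R *: y = S0%:R *: th0 + k.+1%:R *: x ->
  f x <= f y -> f x <= f th0.
Proof.
move=> hf S0p hE hle.
set n : R := (S0 + k.+1)%:R.
have n0 : n != 0 by rewrite /n pnatr_eq0 addnS.
set a : R := n^-1 * S0%:R.
have ey : y = a *: th0 + (1 - a) *: x.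
  have -> : 1 - a = n^-1 * k.+1%:R.
    rewrite /a /n natrD; field.
    by move: n0; rewrite /n natrD.
  rewrite -!scalerA -scalerDr -hE scalerA mulVf // scale1r //.
have a0 : 0 < a by rewrite /a mulr_gt0 // ?invr_gt0 /n ltr0n // addnS.
have a1 : a <= 1.
  rewrite /a ler_pdivrMl ?ltr0n ?addnS // mulr1 /n ler_nat leq_addr //.
have := @cvx_use R d f a th0 x hf (ltW a0) a1; rewrite -ey => hc.
have : a * f x <= a * f th0 by nra.
by rewrite ler_pM2l.
Qed.

End Aux.

Theorem mainTheorem5 (R : realType) (d : nat) (f : 'rV[R]_d -> R) (E : nat)
  (theta : nat -> 'rV[R]_d) :
  convex_function [set: 'rV[R]_d] f ->
  (0 < E)%N ->
  forall (N QN QN1 : nat), (0 < N)%N ->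
    is_Nth_switch_point f E theta N QN ->
    is_Nth_switch_point f E theta N.+1 QN1 ->
    F_at f E theta QN1 <= F_at f E theta QN.
Proof.
move=> hf _ N QN QN1 _ [spN cN] [spN1 cN1].
have cN' : cnt _ _ f E theta QN = N by [].
have cN1' : cnt _ _ f E theta QN1 = N.+1 by [].
have lt : (QN < QN1)%N.
  rewrite ltnNge; apply/negP => le.
  have := cnt_mono _ _ f E theta QN1 (QN - QN1); rewrite subnKC // cN' cN1'.
  by rewrite ltnn.
have nosp : forall i, (QN < i < QN1)%N -> ~~ is_switch_point f E theta i.
  move=> i /andP[a b]; apply/negP => spi.
  have h1 := cnt_lt _ _ f E theta _ _ a; have h2 := cnt_lt _ _ f E theta _ _ b.
  rewrite spi in h1; rewrite spN1 in h2; rewrite cN' in h1; rewrite cN1' in h2.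
  lia.
set k := (QN1.-1 - QN)%N.
have e : (QN + k)%N = QN1.-1 by rewrite /k subnKC // -ltnS prednK // (leq_ltn_trans _ lt).
have hk : (QN + k < QN1)%N by rewrite e prednK // (leq_ltn_trans _ lt).
have inv := inv_run _ _ _ _ _ _ _ spN nosp _ hk.
have inv' := inv_add _ _ _ _ _ _ (theta QN1) inv.
have epre : tta_pre f E theta QN1 = tta_add (tta_state_at f E theta (QN + k)) (theta QN1)
  by rewrite e.
rewrite -epre in inv'.
case: inv' => _ [_ hE].
move: spN1 => /andP[_ /andP[_ hle]].
apply: (@final R d f _ _ _ _ _ hf _ hE hle).
by rewrite /tta_pre /tta_add.
Qed.
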